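(* Let $V$ be a commutative unital quantale whose underlying lattice is a frame and in which $k=\top$. Let $(X,a)$, $(Y,b)$ be $V$-groups and $\varphi\colon Y\to\mathrm{Aut}(X)$ a group action such that $\varphi_y\colon(X,a)\to(X,a)$ is a $V$-functor for every $y\in Y$. Define $\mathrm{lex}\colon(X\times Y)\times(X\times Y)\to V$ by $\mathrm{lex}((x,y),(x',y'))=a(x,x')$ if $y=y'$ and $\mathrm{lex}((x,y),(x',y'))=b(y,y')$ if $y\neq y'$. The following are equivalent: (i) $(X,a)\xrightarrow{\langle 1,0\rangle}(X\rtimes_\varphi Y,\mathrm{lex})\underset{\langle 0,1\rangle}{\overset{\pi_2}{\rightleftarrows}}(Y,b)$ is a split extension in $\mathsf{VGrp}$; (ii) for all $x\in X$ and all $y\in Y\setminus\{0\}$, $b(y,0)\otimes b(0,y)\le a(x,0)$.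
   Context: A commutative unital quantale $V$ is a complete lattice with a commutative associative operation $\otimes$ with unit $k$ preserving arbitrary joins in each variable. A $V$-category $(X,a)$: $a\colon X\times X\to V$ with $k\le a(x,x)$ and $a(x,x')\otimes a(x',x'')\le a(x,x'')$; a $V$-functor is a map $f$ with $a(x,x')\le b(f(x),f(x'))$. A $V$-group $(X,a,+)$ is a $V$-category with a group structure (additive, not necessarily abelian) such that $a(x_1,x_2)\otimes a(x_1',x_2')\le a(x_1+x_1',x_2+x_2')$; $V$-homomorphisms are group homomorphisms that are $V$-functors; category $\mathsf{VGrp}$ (pointed since $k=\top$). The semidirect product $X\rtimes_\varphi Y$ is $X\times Y$ with $(x,y)+(x',y')=(x+\varphi_y(x'),y+y')$, $\varphi_y=\varphi(y)$; $\langle 1,0\rangle(x)=(x,0)$, $\langle 0,1\rangle(y)=(0,y)$, $\pi_2(x,y)=y$. A split extension in $\mathsf{VGrp}$ means: the structure on the middle object makes it a $V$-group, all three maps are $V$-homomorphisms, $\pi_2\circ\langle 0,1\rangle=1_Y$, and $\langle 1,0\rangle$ is a kernel of $\pi_2$ in $\mathsf{VGrp}$. *)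

(* Defs.v *)
From Stdlib Require Import ClassicalEpsilon.

Record quantale := Quantale {
  qcar :> Type;
  qle : qcar -> qcar -> Prop;
  qsup : (qcar -> Prop) -> qcar;
  qten : qcar -> qcar -> qcar;
  qk : qcar;
  qle_refl : forall x, qle x x;
  qle_trans : forall x y z, qle x y -> qle y z -> qle x z;
  qle_antisym : forall x y, qle x y -> qle y x -> x = y;
  qsup_ub : forall (S : qcar -> Prop) x, S x -> qle x (qsup S);
  qsup_least : forall (S : qcar -> Prop) u,
      (forall x, S x -> qle x u) -> qle (qsup S) u;
  qtenC : forall x y, qten x y = qten y x;
  qtenA : forall x y z, qten x (qten y z) = qten (qten x y) z;
  qten1 : forall x, qten qk x = x;
  qten_supr : forall x (S : qcar -> Prop),
      qten x (qsup S) = qsup (fun z => exists s, S s /\ z = qten x s);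
  qten_supl : forall x (S : qcar -> Prop),
      qten (qsup S) x = qsup (fun z => exists s, S s /\ z = qten s x)
}.

Arguments qle {q}.
Arguments qsup {q}.
Arguments qten {q}.
Arguments qk {q}.

Definition qtop (V : quantale) : V := qsup (fun _ => True).
Definition qmeet (V : quantale) (x y : V) : V :=
  qsup (fun z => qle z x /\ qle z y).

Definition is_frame (V : quantale) : Prop :=
  forall (x : V) (S : V -> Prop),
    qmeet V x (qsup S) = qsup (fun z => exists s, S s /\ z = qmeet V x s).

Definition is_group {X : Type} (add : X -> X -> X) (zero : X) (opp : X -> X) : Prop :=
  (forall x y z, add x (add y z) = add (add x y) z) /\
  (forall x, add zero x = x) /\ (forall x, add x zero = x) /\
  (forall x, add (opp x) x = zero) /\ (forall x, add x (opp x) = zero).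

Definition is_group_hom {X Y : Type} (addX : X -> X -> X) (addY : Y -> Y -> Y)
  (f : X -> Y) : Prop := forall x x', f (addX x x') = addY (f x) (f x').

Definition is_VCat (V : quantale) {X : Type} (a : X -> X -> V) : Prop :=
  (forall x, qle qk (a x x)) /\
  (forall x x' x'', qle (qten (a x x') (a x' x'')) (a x x'')).

Definition is_VFunctor (V : quantale) {X Y : Type} (a : X -> X -> V) (b : Y -> Y -> V)
  (f : X -> Y) : Prop := forall x x', qle (a x x') (b (f x) (f x')).

Definition is_VGroup (V : quantale) {X : Type} (add : X -> X -> X) (zero : X)
  (opp : X -> X) (a : X -> X -> V) : Prop :=
  is_VCat V a /\ is_group add zero opp /\
  (forall x1 x2 x1' x2', qle (qten (a x1 x2) (a x1' x2')) (a (add x1 x1') (add x2 x2'))).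

Definition is_VHom (V : quantale) {X Y : Type} (addX : X -> X -> X) (a : X -> X -> V)
  (addY : Y -> Y -> Y) (b : Y -> Y -> V) (f : X -> Y) : Prop :=
  is_group_hom addX addY f /\ is_VFunctor V a b f.

(** [f : X -> Y] is a kernel of [g : Y -> W] in VGrp (zero morphisms are the
    constant-zero maps, VGrp being pointed). *)
Definition is_kernel_VGrp (V : quantale)
  {X Y W : Type} (addX : X -> X -> X) (a : X -> X -> V)
  (addY : Y -> Y -> Y) (b : Y -> Y -> V) (zeroW : W)
  (f : X -> Y) (g : Y -> W) : Prop :=
  (forall x, g (f x) = zeroW) /\
  (forall (Z : Type) (addZ : Z -> Z -> Z) (zeroZ : Z) (oppZ : Z -> Z) (c : Z -> Z -> V),
     is_VGroup V addZ zeroZ oppZ c ->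
     forall h : Z -> Y, is_VHom V addZ c addY b h ->
     (forall z, g (h z) = zeroW) ->
     exists u : Z -> X, is_VHom V addZ c addX a u /\ (forall z, f (u z) = h z) /\
       (forall u' : Z -> X, is_VHom V addZ c addX a u' ->
          (forall z, f (u' z) = h z) -> forall z, u' z = u z)).

Definition sd_add {X Y : Type} (addX : X -> X -> X) (addY : Y -> Y -> Y)
  (phi : Y -> X -> X) (p q : X * Y) : X * Y :=
  (addX (fst p) (phi (snd p) (fst q)), addY (snd p) (snd q)).

Definition sd_zero {X Y : Type} (zeroX : X) (zeroY : Y) : X * Y := (zeroX, zeroY).

Definition sd_opp {X Y : Type} (oppX : X -> X) (oppY : Y -> Y)
  (phi : Y -> X -> X) (p : X * Y) : X * Y :=
  (phi (oppY (snd p)) (oppX (fst p)), oppY (snd p)).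

Definition lex (V : quantale) {X Y : Type} (a : X -> X -> V) (b : Y -> Y -> V)
  (p q : X * Y) : V :=
  if excluded_middle_informative (snd p = snd q) then a (fst p) (fst q)
  else b (snd p) (snd q).

Definition inj1 {X Y : Type} (zeroY : Y) (x : X) : X * Y := (x, zeroY).
Definition inj2 {X Y : Type} (zeroX : X) (y : Y) : X * Y := (zeroX, y).
Definition pi2 {X Y : Type} (p : X * Y) : Y := snd p.

Definition is_split_ext_sd (V : quantale) {X Y : Type}
  (addX : X -> X -> X) (zeroX : X) (oppX : X -> X) (a : X -> X -> V)
  (addY : Y -> Y -> Y) (zeroY : Y) (oppY : Y -> Y) (b : Y -> Y -> V)
  (phi : Y -> X -> X) : Prop :=
  is_VGroup V (sd_add addX addY phi) (sd_zero zeroX zeroY) (sd_opp oppX oppY phi)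
    (lex V a b) /\
  is_VHom V addX a (sd_add addX addY phi) (lex V a b) (inj1 zeroY) /\
  is_VHom V (sd_add addX addY phi) (lex V a b) addY b pi2 /\
  is_VHom V addY b (sd_add addX addY phi) (lex V a b) (inj2 zeroX) /\
  (forall y : Y, pi2 (inj2 (X:=X) zeroX y) = y) /\
  is_kernel_VGrp V addX a (sd_add addX addY phi) (lex V a b) zeroY (inj1 zeroY) pi2.

(* Main.v *)
Require Import Defs.
From Stdlib Require Import ClassicalEpsilon.

Lemma qle_k_top (V: quantale) (Hk : qk = qtop V) (x : V) : qle x qk.
Proof. rewrite Hk. unfold qtop. apply qsup_ub. exact I. Qed.

Lemma ten_mono_r (V : quantale) (z x y : V) : qle x y -> qle (qten z x) (qten z y).
Proof.
  intros H.
  assert (E : y = qsup (fun s => s = x \/ s = y)).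
  { apply qle_antisym. apply qsup_ub. right; reflexivity.
    apply qsup_least. intros s [-> | ->]; auto using qle_refl. }
  rewrite E, qten_supr. apply qsup_ub. exists x. split; auto.
Qed.

Lemma ten_mono_l (V : quantale) (z x y : V) : qle x y -> qle (qten x z) (qten y z).
Proof. intros H. rewrite (qtenC _ x), (qtenC _ y). now apply ten_mono_r. Qed.

Lemma ten_mono2 (V : quantale) (x x' y y' : V) : qle x x' -> qle y y' ->
  qle (qten x y) (qten x' y').
Proof.
  intros H1 H2. apply qle_trans with (qten x' y).
  now apply ten_mono_l. now apply ten_mono_r.
Qed.

Lemma ten_le_r (V: quantale) (Hk : qk = qtop V) (x y : V) : qle (qten x y) y.
Proof.
  apply qle_trans with (qten qk y). apply ten_mono_l, qle_k_top, Hk.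
  rewrite qten1. apply qle_refl.
Qed.

Lemma ten_le_l (V: quantale) (Hk : qk = qtop V) (x y : V) : qle (qten x y) x.
Proof. rewrite qtenC. now apply ten_le_r. Qed.


Lemma grp_addK {G : Type} (add : G -> G -> G) zero opp (H : is_group add zero opp) u w :
  add (add u w) (opp w) = u.
Proof. destruct H as [A [zl [zr [il ir]]]]. now rewrite <- A, ir, zr. Qed.

Lemma grp_addKV {G : Type} (add : G -> G -> G) zero opp (H : is_group add zero opp) u w :
  add (add u (opp w)) w = u.
Proof. destruct H as [A [zl [zr [il ir]]]]. now rewrite <- A, il, zr. Qed.

Lemma grp_sub0 {G : Type} (add : G -> G -> G) zero opp (H : is_group add zero opp) u w :
  add u (opp w) = zero -> u = w.
Proof.
  intros E. rewrite <- (grp_addKV add zero opp H u w), E.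
  destruct H as [A [zl [zr [il ir]]]]. now rewrite zl.
Qed.

Lemma grp_canl {G : Type} (add : G -> G -> G) zero opp (H : is_group add zero opp) w u v :
  add w u = add w v -> u = v.
Proof.
  intros E. destruct H as [A [zl [zr [il ir]]]].
  rewrite <- (zl u), <- (zl v), <- (il w), <- !A, E. reflexivity.
Qed.

Lemma grp_canr {G : Type} (add : G -> G -> G) zero opp (H : is_group add zero opp) w u v :
  add u w = add v w -> u = v.
Proof.
  intros E. rewrite <- (grp_addK add zero opp H u w), <- (grp_addK add zero opp H v w), E.
  reflexivity.
Qed.

Lemma vtrans_r (V : quantale) {G : Type} add zero opp (b : G -> G -> V)
  (H : is_VGroup V add zero opp b) u v w :
  qle (b u v) (b (add u w) (add v w)).
Proof.
  destruct H as [[Hr _] [_ Hv]].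
  apply qle_trans with (qten (b u v) (b w w)).
  - rewrite <- (qten1 _ (b u v)) at 1. rewrite qtenC. apply ten_mono_r, Hr.
  - apply Hv.
Qed.

Lemma vtrans_l (V : quantale) {G : Type} add zero opp (b : G -> G -> V)
  (H : is_VGroup V add zero opp b) u v w :
  qle (b u v) (b (add w u) (add w v)).
Proof.
  destruct H as [[Hr _] [_ Hv]].
  apply qle_trans with (qten (b w w) (b u v)).
  - rewrite <- (qten1 _ (b u v)) at 1. apply ten_mono_l, Hr.
  - apply Hv.
Qed.

Lemma lex_same (V : quantale) {X Y : Type} (a : X -> X -> V) (b : Y -> Y -> V) p q :
  snd p = snd q -> lex V a b p q = a (fst p) (fst q).
Proof. intros E. unfold lex. destruct excluded_middle_informative; tauto. Qed.

Lemma lex_neq (V : quantale) {X Y : Type} (a : X -> X -> V) (b : Y -> Y -> V) p q :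
  snd p <> snd q -> lex V a b p q = b (snd p) (snd q).
Proof. intros E. unfold lex. destruct excluded_middle_informative; tauto. Qed.

Theorem theorem7p4 (V : quantale) (HV : is_frame V) (Hk : qk = qtop V)
  (X : Type) (addX : X -> X -> X) (zeroX : X) (oppX : X -> X) (a : X -> X -> V)
  (HX : is_VGroup V addX zeroX oppX a)
  (Y : Type) (addY : Y -> Y -> Y) (zeroY : Y) (oppY : Y -> Y) (b : Y -> Y -> V)
  (HY : is_VGroup V addY zeroY oppY b)
  (phi : Y -> X -> X)
  (Hphi_aut : forall y, is_group_hom addX addX (phi y) /\
                        (forall x', exists! x, phi y x = x'))
  (Hphi_act : forall y y' x, phi (addY y y') x = phi y (phi y' x))
  (Hphi_V : forall y, is_VFunctor V a a (phi y)) :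
  is_split_ext_sd V addX zeroX oppX a addY zeroY oppY b phi <->
  (forall (x : X) (y : Y), y <> zeroY ->
     qle (qten (b y zeroY) (b zeroY y)) (a x zeroX)).
Proof.
  pose proof HX as HX'. pose proof HY as HY'.
  destruct HX' as [[HXr HXt] [HXg HXv]].
  destruct HY' as [[HYr HYt] [HYg HYv]].
  pose proof HXg as [XA [Xzl [Xzr [Xil Xir]]]].
  pose proof HYg as [YA [Yzl [Yzr [Yil Yir]]]].
  split.
  - intros [[[_ Ht] _] _] x y Hy.
    specialize (Ht (x, zeroY) (zeroX, y) (zeroX, zeroY)).
    rewrite (lex_neq V a b (x, zeroY) (zeroX, y)) in Ht by (simpl; congruence).
    rewrite (lex_neq V a b (zeroX, y) (zeroX, zeroY)) in Ht by (simpl; congruence).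
    rewrite (lex_same V a b (x, zeroY) (zeroX, zeroY)) in Ht by reflexivity.
    simpl in Ht. rewrite qtenC. exact Ht.
  - intros H2.
    assert (phi0 : forall x, phi zeroY x = x).
    { intros x. pose proof (Hphi_act zeroY zeroY x) as E. rewrite Yzl in E.
      destruct (Hphi_aut zeroY) as [_ Hu].
      destruct (Hu (phi zeroY x)) as [w [_ Hw]].
      transitivity w. symmetry; apply Hw; auto. apply Hw; auto. }
    assert (phiz : forall y, phi y zeroX = zeroX).
    { intros y. destruct (Hphi_aut y) as [Hh _].
      pose proof (Hh zeroX zeroX) as E. rewrite Xzl in E.
      apply (grp_canl addX zeroX oppX HXg (phi y zeroX)). rewrite <- E, Xzr. reflexivity. }
    assert (atr : forall v, (forall w, qle v (a w zeroX)) -> forall x x', qle v (a x x')).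
    { intros v Hv x x'. apply qle_trans with (a (addX x (oppX x')) zeroX). apply Hv.
      eapply qle_trans. apply (vtrans_r V addX zeroX oppX a HX _ _ x').
      rewrite (grp_addKV addX zeroX oppX HXg), Xzl. apply qle_refl. }
    assert (K1 : forall y y' x x', y <> y' -> qle (qten (b y y') (b y' y)) (a x x')).
    { intros y y' x x' Hne. apply atr. intros w.
      apply qle_trans with (qten (b (addY y (oppY y')) zeroY) (b zeroY (addY y (oppY y')))).
      - apply ten_mono2.
        + rewrite <- (Yir y'). apply (vtrans_r V addY zeroY oppY b HY).
        + rewrite <- (Yir y'). apply (vtrans_r V addY zeroY oppY b HY).
      - apply H2. intros E. apply Hne. exact (grp_sub0 addY zeroY oppY HYg _ _ E). }
    assert (K2 : forall y1 y2 y1' y2' x x', y1 <> y2 -> addY y1 y1' = addY y2 y2' ->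
               qle (qten (b y1 y2) (b y1' y2')) (a x x')).
    { intros y1 y2 y1' y2' x x' Hne E.
      apply qle_trans with (qten (b y1 y2) (b y2 y1)); [|apply K1; auto].
      apply ten_mono_r.
      eapply qle_trans. apply (vtrans_l V addY zeroY oppY b HY _ _ y1).
      rewrite E.
      eapply qle_trans. apply (vtrans_r V addY zeroY oppY b HY _ _ (oppY y2')).
      rewrite !(grp_addK addY zeroY oppY HYg). apply qle_refl. }
    unfold is_split_ext_sd. split; [|split; [|split; [|split; [|split]]]].
    +
      split; [split|split].
      * intros [x y]. rewrite lex_same by reflexivity. apply HXr.
      * intros [x y] [x' y'] [x'' y''].
        destruct (excluded_middle_informative (y = y')) as [e1|n1];
        destruct (excluded_middle_informative (y' = y'')) as [e2|n2].
        -- subst. rewrite !lex_same by reflexivity. apply HXt.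
        -- subst y'. rewrite (lex_same V a b (x,y) (x',y)) by reflexivity.
           rewrite !lex_neq by (simpl; auto). apply ten_le_r, Hk.
        -- subst y''. rewrite (lex_same V a b (x',y') (x'',y')) by reflexivity.
           rewrite !lex_neq by (simpl; auto). apply ten_le_l, Hk.
        -- rewrite (lex_neq V a b (x,y) (x',y')) by (simpl; auto).
           rewrite (lex_neq V a b (x',y') (x'',y'')) by (simpl; auto).
           destruct (excluded_middle_informative (y = y'')) as [e3|n3].
           ++ subst. rewrite lex_same by reflexivity. simpl. apply K1; auto.
           ++ rewrite lex_neq by (simpl; auto). apply HYt.
      * unfold is_group, sd_add, sd_zero, sd_opp; simpl.
        split; [|split; [|split; [|split]]].
        -- intros [x1 y1] [x2 y2] [x3 y3]; simpl.
           destruct (Hphi_aut y1) as [Hh _].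
           rewrite Hh, Hphi_act, XA, YA. reflexivity.
        -- intros [x y]; simpl. rewrite phi0, Xzl, Yzl. reflexivity.
        -- intros [x y]; simpl. rewrite phiz, Xzr, Yzr. reflexivity.
        -- intros [x y]; simpl. destruct (Hphi_aut (oppY y)) as [Hh _].
           rewrite <- Hh, Xil, phiz, Yil. reflexivity.
        -- intros [x y]; simpl. rewrite <- Hphi_act, Yir, phi0, Xir. reflexivity.
      * intros [x1 y1] [x2 y2] [x1' y1'] [x2' y2']. unfold sd_add; simpl.
        destruct (excluded_middle_informative (y1 = y2)) as [e1|n1];
        destruct (excluded_middle_informative (y1' = y2')) as [e2|n2].
        -- subst. rewrite !lex_same by reflexivity. simpl.
           eapply qle_trans. apply ten_mono_r, (Hphi_V y2). apply HXv.
        -- subst. rewrite lex_same by reflexivity.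
           rewrite !lex_neq by (simpl; auto; intros E; apply n2;
                                 exact (grp_canl addY zeroY oppY HYg _ _ _ E)).
           simpl. eapply qle_trans. apply ten_le_r, Hk.
           apply (vtrans_l V addY zeroY oppY b HY).
        -- subst. rewrite (lex_same V a b (x1', y2') (x2', y2')) by reflexivity.
           rewrite !lex_neq by (simpl; auto; intros E; apply n1;
                                 exact (grp_canr addY zeroY oppY HYg _ _ _ E)).
           simpl. eapply qle_trans. apply ten_le_l, Hk.
           apply (vtrans_r V addY zeroY oppY b HY).
        -- rewrite (lex_neq V a b (x1,y1) (x2,y2)) by (simpl; auto).
           rewrite (lex_neq V a b (x1',y1') (x2',y2')) by (simpl; auto).
           simpl.
           destruct (excluded_middle_informative (addY y1 y1' = addY y2 y2')) as [e3|n3].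
           ++ rewrite lex_same by (simpl; auto). simpl. apply K2; auto.
           ++ rewrite lex_neq by (simpl; auto). apply HYv.
    + split.
      * intros x x'. unfold inj1, sd_add; simpl. rewrite phi0, Yzl. reflexivity.
      * intros x x'. unfold inj1. rewrite lex_same by reflexivity. apply qle_refl.
    + split.
      * intros p q. reflexivity.
      * intros [x y] [x' y']. unfold pi2; simpl.
        destruct (excluded_middle_informative (y = y')) as [e|n].
        -- subst. rewrite lex_same by reflexivity.
           eapply qle_trans. apply qle_k_top, Hk. apply HYr.
        -- rewrite lex_neq by (simpl; auto). apply qle_refl.
    + split.
      * intros y y'. unfold inj2, sd_add; simpl. rewrite phiz, Xzl. reflexivity.
      * intros y y'. unfold inj2.
        destruct (excluded_middle_informative (y = y')) as [e|n].
        -- subst. rewrite lex_same by reflexivity.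
           eapply qle_trans. apply qle_k_top, Hk. apply HXr.
        -- rewrite lex_neq by (simpl; auto). apply qle_refl.
    + intros y. reflexivity.
    + split.
      * intros x. reflexivity.
      * intros Z addZ zeroZ oppZ c HZ h [Hh1 Hh2] Hh0.
        unfold pi2 in Hh0.
        exists (fun z => fst (h z)). split; [split|split].
        -- intros z z'. rewrite Hh1. unfold sd_add; simpl. rewrite Hh0, phi0. reflexivity.
        -- intros z z'. specialize (Hh2 z z').
           rewrite lex_same in Hh2 by (rewrite !Hh0; reflexivity). exact Hh2.
        -- intros z. unfold inj1. rewrite <- (Hh0 z). destruct (h z); reflexivity.
        -- intros u' _ Hu' z. rewrite <- (Hu' z). reflexivity.
Qed.
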